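(* Let $\mathbf{A}:\mathbb{R}^{2\times 2}\to\mathbb{R}^2$ be the Cauchy–Riemann map $\mathbf{A}:X=(X_{11}+X_{22},\,X_{21}-X_{12})$. Fix constants $b,c>0$ with $b+c<1$ and $\sqrt2\,c+b>1$, and a unit vector $\eta\in\mathbb{R}^2$. Define $F(x,X):=\mathbf{A}:X+\eta\big(b|X|+c|\mathbf{A}:X|\big)$ for $x\in\mathbb{R}^2$, $X\in\mathbb{R}^{2\times2}$. Then for all $X,Y\in\mathbb{R}^{2\times2}$, $$\big|[F(x,X+Y)-F(x,X)]-\mathbf{A}:Y\big|\leq b\,\nu(\mathbf{A})|Y|+c|\mathbf{A}:Y|,$$ so $F$ satisfies the AK-Condition with respect to $\mathbf{A}$ with $\alpha\equiv1$, $\beta=b$, $\gamma=c$; but there is no $\beta\in(0,1)$ for which $\big|[F(x,X+Y)-F(x,X)]-\mathbf{A}:Y\big|\leq\beta\,\nu(\mathbf{A})|Y|$ holds for all $X,Y$, i.e. $F$ does not satisfy the K-Condition with respect to $\mathbf{A}$.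
   Context: For $X\in\mathbb{R}^{2\times2}$, $|X|$ is the Frobenius norm; $\nu(\mathbf{A}):=\min_{|\eta|=|a|=1}|\mathbf{A}:\eta\otimes a|$, where $\eta\otimes a$ is the matrix with entries $\eta_\beta a_j$ (for the Cauchy–Riemann map, $\nu(\mathbf{A})=1$). AK-Condition: $F$ satisfies it with respect to $\mathbf{A}$ if there exist a positive function $\alpha$ with $\alpha,1/\alpha\in L^\infty$ and $\beta,\gamma>0$ with $\beta+\gamma<1$ such that for all $X,Y$ and a.e. $x$: $\big|\alpha(x)[F(x,X+Y)-F(x,Y)]-\mathbf{A}:X\big|\leq\beta\,\nu(\mathbf{A})|X|+\gamma|\mathbf{A}:X|$. K-Condition: $F$ satisfies it with respect to $\mathbf{A}$ if there exists $0<\beta<1$ such that for all $X,Y$ and a.e. $x$: $\big|[F(x,X+Y)-F(x,X)]-\mathbf{A}:Y\big|\leq\beta\,\nu(\mathbf{A})|Y|$. *)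

(* Defs.v *)
From Stdlib Require Import Reals Lra ClassicalEpsilon.
Open Scope R_scope.

Definition R2 : Type := (R * R)%type.
Record M2 : Type := mkM2 { m11 : R; m12 : R; m21 : R; m22 : R }.

Definition vadd (u v : R2) : R2 := (fst u + fst v, snd u + snd v).
Definition vsub (u v : R2) : R2 := (fst u - fst v, snd u - snd v).
Definition vscale (t : R) (u : R2) : R2 := (t * fst u, t * snd u).
Definition vnorm (u : R2) : R := sqrt (fst u ^ 2 + snd u ^ 2).

Definition madd (X Y : M2) : M2 :=
  mkM2 (m11 X + m11 Y) (m12 X + m12 Y) (m21 X + m21 Y) (m22 X + m22 Y).

Definition frob (X : M2) : R :=
  sqrt (m11 X ^ 2 + m12 X ^ 2 + m21 X ^ 2 + m22 X ^ 2).

Definition tens (eta a : R2) : M2 :=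
  mkM2 (fst eta * fst a) (fst eta * snd a) (snd eta * fst a) (snd eta * snd a).

Definition CR (X : M2) : R2 := (m11 X + m22 X, m21 X - m12 X).

Definition IsNu (A : M2 -> R2) (m : R) : Prop :=
  (exists eta a : R2, vnorm eta = 1 /\ vnorm a = 1 /\ vnorm (A (tens eta a)) = m) /\
  (forall eta a : R2, vnorm eta = 1 -> vnorm a = 1 -> m <= vnorm (A (tens eta a))).

(* nu(A) := min_{|eta|=|a|=1} |A : eta (x) a| (chosen by classical choice;
   the minimum is unique when it exists). *)
Definition nu (A : M2 -> R2) : R := epsilon (inhabits 0) (fun m => IsNu A m).

(* AK-Condition (with "a.e. x" read as "every x"). *)
Definition AK_cond (F : R2 -> M2 -> R2) (A : M2 -> R2) : Prop :=
  exists (alpha : R2 -> R) (beta gamma : R),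
    (exists M : R, forall x, 0 < alpha x /\ alpha x <= M /\ / alpha x <= M) /\
    0 < beta /\ 0 < gamma /\ beta + gamma < 1 /\
    forall x X Y,
      vnorm (vsub (vscale (alpha x) (vsub (F x (madd X Y)) (F x Y))) (A X))
        <= beta * nu A * frob X + gamma * vnorm (A X).

Definition Fex (b c : R) (eta : R2) (x : R2) (X : M2) : R2 :=
  vadd (CR X) (vscale (b * frob X + c * vnorm (CR X)) eta).

(* Main.v *)
Require Import Defs.
From Stdlib Require Import Reals Lra Psatz ClassicalEpsilon.
Open Scope R_scope.

Lemma cs4 (a1 a2 a3 a4 b1 b2 b3 b4 : R) :
  a1*b1+a2*b2+a3*b3+a4*b4 <=
  sqrt (a1^2+a2^2+a3^2+a4^2) * sqrt (b1^2+b2^2+b3^2+b4^2).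
Proof.
  rewrite <- sqrt_mult_alt by nra.
  destruct (Rle_or_lt (a1*b1+a2*b2+a3*b3+a4*b4) 0) as [H|H].
  - pose proof (sqrt_pos ((a1^2+a2^2+a3^2+a4^2)*(b1^2+b2^2+b3^2+b4^2))); lra.
  - rewrite <- (sqrt_pow2 (a1*b1+a2*b2+a3*b3+a4*b4)) by lra.
    apply sqrt_le_1_alt.
    assert (E : (a1^2+a2^2+a3^2+a4^2)*(b1^2+b2^2+b3^2+b4^2) - (a1*b1+a2*b2+a3*b3+a4*b4)^2
      = (a1*b2-a2*b1)^2+(a1*b3-a3*b1)^2+(a1*b4-a4*b1)^2+(a2*b3-a3*b2)^2+(a2*b4-a4*b2)^2+(a3*b4-a4*b3)^2) by ring.
    assert (0 <= (a1*b2-a2*b1)^2+(a1*b3-a3*b1)^2+(a1*b4-a4*b1)^2+(a2*b3-a3*b2)^2+(a2*b4-a4*b2)^2+(a3*b4-a4*b3)^2).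
    { repeat apply Rplus_le_le_0_compat; apply pow2_ge_0. }
    lra.
Qed.

Lemma tri4 (a1 a2 a3 a4 b1 b2 b3 b4 : R) :
  sqrt ((a1+b1)^2+(a2+b2)^2+(a3+b3)^2+(a4+b4)^2) <=
  sqrt (a1^2+a2^2+a3^2+a4^2) + sqrt (b1^2+b2^2+b3^2+b4^2).
Proof.
  pose proof (cs4 a1 a2 a3 a4 b1 b2 b3 b4) as H.
  set (A := a1^2+a2^2+a3^2+a4^2) in *.
  set (B := b1^2+b2^2+b3^2+b4^2) in *.
  assert (HA : 0 <= A) by (unfold A; nra).
  assert (HB : 0 <= B) by (unfold B; nra).
  pose proof (sqrt_pos A). pose proof (sqrt_pos B).
  rewrite <- (sqrt_pow2 (sqrt A + sqrt B)) by lra.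
  apply sqrt_le_1_alt.
  replace ((sqrt A + sqrt B)^2) with (sqrt A * sqrt A + sqrt B * sqrt B + 2 * (sqrt A * sqrt B)) by ring.
  rewrite !sqrt_sqrt by assumption.
  replace ((a1+b1)^2+(a2+b2)^2+(a3+b3)^2+(a4+b4)^2) with (A + B + 2*(a1*b1+a2*b2+a3*b3+a4*b4)) by (unfold A, B; ring).
  lra.
Qed.

Lemma frob_tri X Y : frob (madd X Y) <= frob X + frob Y.
Proof. destruct X, Y; unfold frob, madd; simpl; apply tri4. Qed.

Lemma vnorm_tri u v : vnorm (vadd u v) <= vnorm u + vnorm v.
Proof.
  destruct u as [u1 u2], v as [v1 v2]; unfold vnorm, vadd, fst, snd.
  pose proof (tri4 u1 u2 0 0 v1 v2 0 0) as H.
  replace ((u1+v1)^2+(u2+v2)^2+(0+0)^2+(0+0)^2) with ((u1+v1)^2+(u2+v2)^2) in H by ring.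
  replace (u1^2+u2^2+0^2+0^2) with (u1^2+u2^2) in H by ring.
  replace (v1^2+v2^2+0^2+0^2) with (v1^2+v2^2) in H by ring.
  exact H.
Qed.

Definition mneg (Y : M2) : M2 := mkM2 (- m11 Y) (- m12 Y) (- m21 Y) (- m22 Y).

Lemma frob_neg Y : frob (mneg Y) = frob Y.
Proof. destruct Y; unfold frob, mneg; simpl; f_equal; ring. Qed.

Lemma frob_rev X Y : Rabs (frob (madd X Y) - frob X) <= frob Y.
Proof.
  pose proof (frob_tri X Y) as H0.
  pose proof (frob_tri (madd X Y) (mneg Y)) as H.
  replace (madd (madd X Y) (mneg Y)) with X in H
    by (destruct X, Y; unfold madd, mneg; simpl; f_equal; ring).
  rewrite frob_neg in H.
  apply Rabs_le; lra.
Qed.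

Lemma vnorm_rev u v : Rabs (vnorm (vadd u v) - vnorm u) <= vnorm v.
Proof.
  pose proof (vnorm_tri u v) as H0.
  pose proof (vnorm_tri (vadd u v) (- fst v, - snd v)) as H.
  replace (vadd (vadd u v) (- fst v, - snd v)) with u in H
    by (destruct u, v; unfold vadd; simpl; f_equal; ring).
  replace (vnorm (- fst v, - snd v)) with (vnorm v) in H
    by (destruct v; unfold vnorm; simpl; f_equal; ring).
  apply Rabs_le; lra.
Qed.

Lemma vnorm_scale s u : vnorm (vscale s u) = Rabs s * vnorm u.
Proof.
  destruct u as [u1 u2]; unfold vnorm, vscale, fst, snd.
  replace ((s*u1)^2 + (s*u2)^2) with (s^2 * (u1^2+u2^2)) by ring.
  rewrite sqrt_mult_alt by nra.
  rewrite <- sqrt_Rsqr_abs; unfold Rsqr; f_equal; f_equal; ring.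
Qed.

Lemma CR_add X Y : CR (madd X Y) = vadd (CR X) (CR Y).
Proof. destruct X, Y; unfold CR, madd, vadd; simpl; f_equal; ring. Qed.

Lemma key b c eta x X Y :
  vsub (vsub (Fex b c eta x (madd X Y)) (Fex b c eta x X)) (CR Y) =
  vscale (b * (frob (madd X Y) - frob X) + c * (vnorm (CR (madd X Y)) - vnorm (CR X))) eta.
Proof.
  unfold Fex. rewrite CR_add.
  destruct X, Y, eta; unfold CR, vadd, vsub, vscale; simpl; f_equal; ring.
Qed.

Lemma nu_CR : nu CR = 1.
Proof.
  assert (Hall : forall e a, vnorm e = 1 -> vnorm a = 1 -> vnorm (CR (tens e a)) = 1).
  { intros [e1 e2] [a1 a2] He Ha; unfold vnorm, CR, tens, fst, snd, m11, m12, m21, m22 in *.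
    replace ((e1*a1+e2*a2)^2 + (e2*a1 - e1*a2)^2) with ((e1^2+e2^2)*(a1^2+a2^2)) by ring.
    rewrite sqrt_mult_alt by nra. rewrite He, Ha; ring. }
  assert (Hex : IsNu CR 1).
  { split.
    - exists (1,0), (1,0).
      assert (H1 : vnorm (1,0) = 1) by (unfold vnorm, fst, snd; replace (1^2+0^2) with 1 by ring; apply sqrt_1).
      repeat split; auto.
    - intros e a He Ha; rewrite Hall; auto; lra. }
  unfold nu.
  destruct (epsilon_spec (inhabits 0) (fun m => IsNu CR m) (ex_intro _ 1 Hex)) as [[e [a [He [Ha Hm]]]] _].
  rewrite <- Hm. apply Hall; auto.
Qed.

Lemma part1 b c eta (hb : 0 < b) (hc : 0 < c) (heta : vnorm eta = 1) x X Y :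
  vnorm (vsub (vsub (Fex b c eta x (madd X Y)) (Fex b c eta x X)) (CR Y))
    <= b * nu CR * frob Y + c * vnorm (CR Y).
Proof.
  rewrite key, vnorm_scale, heta, nu_CR, Rmult_1_r, Rmult_1_r.
  pose proof (frob_rev X Y). pose proof (vnorm_rev (CR X) (CR Y)).
  rewrite CR_add.
  eapply Rle_trans; [apply Rabs_triang|].
  rewrite !Rabs_mult, (Rabs_right b), (Rabs_right c) by lra.
  apply Rplus_le_compat; apply Rmult_le_compat_l; lra.
Qed.

Theorem mainTheorem4 (b c : R) (eta : R2)
  (hb : 0 < b) (hc : 0 < c) (hbc : b + c < 1) (hsq : sqrt 2 * c + b > 1)
  (heta : vnorm eta = 1) :
  (forall (x : R2) (X Y : M2),
     vnorm (vsub (vsub (Fex b c eta x (madd X Y)) (Fex b c eta x X)) (CR Y))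
       <= b * nu CR * frob Y + c * vnorm (CR Y)) /\
  AK_cond (Fex b c eta) CR /\
  (forall (x : R2) (beta : R), 0 < beta < 1 ->
     ~ (forall X Y : M2,
          vnorm (vsub (vsub (Fex b c eta x (madd X Y)) (Fex b c eta x X)) (CR Y))
            <= beta * nu CR * frob Y)).
Proof.
  split; [|split].
  - intros; apply part1; auto.
  - exists (fun _ => 1), b, c. split.
    + exists 1; intros; rewrite Rinv_1; lra.
    + repeat split; try lra.
      intros x X Y.
      replace (madd X Y) with (madd Y X)
        by (destruct X, Y; unfold madd; simpl; f_equal; ring).
      replace (vscale 1 (vsub (Fex b c eta x (madd Y X)) (Fex b c eta x Y)))
        with (vsub (Fex b c eta x (madd Y X)) (Fex b c eta x Y))
        by (destruct (vsub (Fex b c eta x (madd Y X)) (Fex b c eta x Y)); unfold vscale; simpl; f_equal; ring).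
      apply part1; auto.
  - intros x beta [hb0 hb1] H.
    specialize (H (mkM2 0 0 0 0) (mkM2 1 0 0 1)).
    rewrite key, vnorm_scale, heta, nu_CR in H.
    unfold frob, CR, madd, vnorm, fst, snd, m11, m12, m21, m22 in H.
    replace ((0+1)^2 + (0+0)^2 + (0+0)^2 + (0+1)^2) with 2 in H by ring.
    replace (0^2+0^2+0^2+0^2) with 0 in H by ring.
    replace (1^2+0^2+0^2+1^2) with 2 in H by ring.
    replace ((0+1 + (0+1))^2 + (0+0 - (0+0))^2) with (2*2) in H by ring.
    replace ((0+0)^2 + (0-0)^2) with 0 in H by ring.
    rewrite sqrt_0, sqrt_square in H by lra.
    pose proof (sqrt_lt_R0 2 ltac:(lra)).
    pose proof (sqrt_sqrt 2 ltac:(lra)).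
    rewrite Rabs_right in H by nra.
    nra.
Qed.
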